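(* Let $q$ be an odd prime power, $n=2^v$ with $v\ge1$, and $t$ an integer with $qt\equiv t\pmod{2^v}$ and $\nu_2(t)<v$. Type-I duadic splittings of $\mathbb{Z}_{2^v}$ given by $\tau_t$ exist if and only if $\nu_2(t)<\nu_2(q-1)$.
   Context: $\mu_q:\mathbb{Z}_n\to\mathbb{Z}_n$, $i\mapsto qi\bmod n$; $P$ is $\mu_q$-invariant if $\mu_q(P)=P$. $\tau_t:\mathbb{Z}_n\to\mathbb{Z}_n$, $i\mapsto i+t\bmod n$ (a $q$-translation). Type-I duadic splittings of $\mathbb{Z}_n$ given by $\tau_t$ exist if there is a $\mu_q$-invariant $P$ with $\mathbb{Z}_n=P\cup\tau_t(P)$ a disjoint union. $\nu_2$ is the $2$-adic valuation. *)

(* Defs.v *)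
From mathcomp Require Import all_boot all_order all_algebra.
Set Implicit Arguments. Unset Strict Implicit. Unset Printing Implicit Defensive.
Import GRing.Theory Num.Theory.

(* Z_n is represented by 'I_n (residues 0..n-1). *)

Lemma ord_mod_lt (n : nat) (i : 'I_n) (m : nat) : m %% n < n.
Proof. by rewrite ltn_pmod // (leq_ltn_trans (leq0n i) (ltn_ord i)). Qed.

Definition mu (n q : nat) (i : 'I_n) : 'I_n := Ordinal (ord_mod_lt i (q * i)).

Definition tau (n : nat) (t : int) (i : 'I_n) : 'I_n :=
  Ordinal (ord_mod_lt i (i + `|(t %% n%:Z)%Z|%N)).

Definition mu_invariant (n q : nat) (P : {set 'I_n}) : Prop :=
  [set mu q i | i in P] = P.

Definition splits_by (n : nat) (t : int) (P : {set 'I_n}) : Prop :=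
  P :|: [set tau t i | i in P] = [set: 'I_n] /\
  [disjoint P & [set tau t i | i in P]].

Definition typeI_duadic_exists (n q : nat) (t : int) : Prop :=
  exists P : {set 'I_n}, mu_invariant q P /\ splits_by t P.

Definition nu2 (t : int) : nat := logn 2 `|t|%N.

Definition prime_power (q : nat) : Prop :=
  exists p k, prime p /\ 0 < k /\ q = p ^ k.

(* Main.v *)
Require Import Defs.
From mathcomp Require Import all_boot all_order all_algebra.
From mathcomp Require Import zify.
Import GRing.Theory Num.Theory.

Local Open Scope ring_scope.
Local Open Scope nat_scope.

Definition TT (n : nat) (t : int) : nat := `|(t %% n%:Z)%Z|%N.

Lemma tau_val n t (i : 'I_n) : val (tau t i) = (i + TT n t) %% n.
Proof. by []. Qed.

Lemma tau_inj n t : injective (@tau n t).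
Proof.
move=> i j /(congr1 val); rewrite !tau_val => /eqP.
rewrite eqn_modDr !modn_small // => /eqP h; exact: val_inj.
Qed.

Lemma flip_of_splits n t (P : {set 'I_n}) : splits_by t P ->
  forall i, (i \in P) = ~~ (tau t i \in P).
Proof.
move=> [hU hD] i; case hi: (i \in P).
  by rewrite (disjointFl hD (imset_f (tau t) hi)).
have : tau t i \in [set: 'I_n] by rewrite inE.
rewrite -hU in_setU => /orP [->//|/imsetP [j hj /tau_inj e]].
by rewrite -e hi in hj.
Qed.

Lemma splits_of_flip n t (P : {set 'I_n}) : TT n t < n ->
  (forall i, (i \in P) = ~~ (tau t i \in P)) -> splits_by t P.
Proof.
move=> hT hf; split.
  apply/setP => j; rewrite in_setU inE.
  case hj: (j \in P) => //=.
  pose i := Ordinal (ord_mod_lt j (j + (n - TT n t))).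
  have e : tau t i = j.
    apply: val_inj; rewrite tau_val /= modnDml -addnA subnK ?(ltnW hT) //.
    by rewrite modnDr modn_small.
  by rewrite -e imset_f // hf e hj.
apply/pred0P => j /=; apply/negbTE/andP => -[hj /imsetP [i hi e]].
by move: hi; rewrite hf -e hj.
Qed.

Lemma iter_tau n t (i : 'I_n) k : val (iter k (tau t) i) = (i + k * TT n t) %% n.
Proof.
elim: k => [|k IH]; first by rewrite /= mul0n addn0 modn_small.
by rewrite iterS tau_val IH modnDml mulSn [TT n t + _]addnC addnA.
Qed.

Lemma iter_tau_mem n t (P : {set 'I_n}) :
  (forall i, (i \in P) = ~~ (tau t i \in P)) ->
  forall k i, (iter k (tau t) i \in P) = (i \in P) (+) odd k.
Proof.
move=> hf; elim=> [|k IH] i /=; first by rewrite addbF.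
have : forall y, (tau t y \in P) = ~~ (y \in P) by move=> y; rewrite [y \in P]hf negbK.
by move=> ->; rewrite IH; case: (i \in P); case: (odd k).
Qed.

Lemma TT_int n t : 0 < n -> (TT n t)%:Z = (t %% n%:Z)%Z.
Proof. by move=> hn; rewrite /TT gez0_abs // modz_ge0 // eqz_nat -lt0n. Qed.

Lemma TT_lt n t : 0 < n -> TT n t < n.
Proof. by move=> hn; rewrite -ltz_nat TT_int // ltz_pmod // ltz_nat. Qed.

Lemma TT_dvd v t k : k <= v -> (2 ^ k %| TT (2 ^ v) t) = (2 ^ k %| `|t|%N).
Proof.
move=> hk.
have hn : 0 < 2 ^ v by rewrite expn_gt0.
have h1 : ((2 ^ v)%:Z %| (t - (TT (2 ^ v) t)%:Z)%R)%Z.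
  by rewrite -eqz_mod_dvd TT_int // modz_mod.
have h2 : ((2 ^ k)%:Z %| (t - (TT (2 ^ v) t)%:Z)%R)%Z.
  apply: dvdz_trans h1; rewrite dvdzE /=; exact: dvdn_exp2l.
have -> : (2 ^ k %| `|t|%N) = ((2 ^ k)%:Z %| t)%Z by rewrite dvdzE.
have -> : (2 ^ k %| TT (2 ^ v) t) = ((2 ^ k)%:Z %| (TT (2 ^ v) t)%:Z)%Z by rewrite dvdzE.
by rewrite -[X in _ = (_ %| X)%Z](subrK (TT (2 ^ v) t)%:Z t) rpredDl.
Qed.

Lemma TT_q v t q : ((q%:Z * t)%R = t %[mod (2 ^ v)%:Z])%Z ->
  q * TT (2 ^ v) t = TT (2 ^ v) t %[mod 2 ^ v].
Proof.
move=> hq; have hn : 0 < 2 ^ v by rewrite expn_gt0.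
apply/eqP; rewrite -eqz_nat -!modz_nat PoszM TT_int //.
by rewrite modzMmr hq modz_mod.
Qed.

Lemma mod_half a M : 0 < M -> a < M.*2 -> ((a + M) %% M.*2 < M) = ~~ (a < M).
Proof.
move=> hM ha; case: (ltnP a M) => h /=.
  rewrite modn_small; first by rewrite ltnNge leq_addl.
  by rewrite -addnn ltn_add2r.
have -> : a + M = (a - M) + M.*2 by lia.
rewrite modnDr modn_small; first by apply/idP; lia.
lia.
Qed.

Lemma T_mod s T : 2 ^ s %| T -> ~~ (2 ^ s.+1 %| T) -> T %% 2 ^ s.+1 = 2 ^ s.
Proof.
move=> h1 h2.
have eT := divnK h1; set w := T %/ 2 ^ s in eT.
have ow : odd w.
  apply/negPn/negP => ew; move: h2; rewrite -eT.
  rewrite -(odd_double_half w) (negbTE ew) add0n -muln2 -mulnA expnS.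
  by rewrite [2 * _]mulnC dvdn_mull.
rewrite -eT -(odd_double_half w) ow mulnDl mul1n -muln2 -mulnA -expnS.
by rewrite addnC modnMDl modn_small // ltn_exp2l.
Qed.

Lemma mu_inj v q : odd q -> injective (@mu (2 ^ v) q).
Proof.
move=> oq.
have cq : coprime (2 ^ v) q by rewrite coprimeXl // coprime2n.
suff H : forall i j : 'I_(2 ^ v), i <= j -> mu q i = mu q j -> i = j.
  by move=> i j e; case: (leqP i j) => h; [exact: H|symmetry; apply: H (ltnW h) _].
move=> i j hij /(congr1 val) /= /eqP; rewrite eq_sym eqn_mod_dvd ?leq_mul2l ?hij ?orbT //.
rewrite -mulnBr Gauss_dvdr // => hd.
apply: val_inj; apply/eqP; rewrite eqn_leq hij /= -subn_eq0.
have := ltn_ord j; move: hd; case E: (j - i) => [//|k].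
move/dvdn_leq => /(_ isT); lia.
Qed.

Theorem corollary3p5 (q v : nat) (t : int) :
  prime_power q -> odd q -> 1 <= v ->
  ((q%:Z * t)%R = t %[mod (2 ^ v)%:Z])%Z ->
  t != 0%R -> nu2 t < v ->
  (typeI_duadic_exists (2 ^ v) q t <-> nu2 t < logn 2 (q - 1)).
Proof.
move=> [p [k [pp [k0 eq]]]] oq v1 hq t0 hs.
rewrite /nu2 in hs *; set s := logn 2 `|t|%N in hs *.
have hn : 0 < 2 ^ v by rewrite expn_gt0.
have ht : 0 < `|t|%N by rewrite absz_gt0.
have hT1 : 2 ^ s %| TT (2 ^ v) t by rewrite TT_dvd ?(ltnW hs) // pfactor_dvdn.
have hT2 : ~~ (2 ^ s.+1 %| TT (2 ^ v) t) by rewrite TT_dvd // pfactor_dvdn // ltnn.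
have hqT := @TT_q v t q hq.
set T := TT (2 ^ v) t in hT1 hT2 hqT.
have q2 : 1 < q.
  rewrite eq; apply: (leq_trans (prime_gt1 pp)).
  by rewrite -{1}(expn1 p) leq_pexp2l // prime_gt0.
have q1 : 0 < q - 1 by rewrite subn_gt0.
split.
- case=> P [hmu hspl]; rewrite ltnNge; apply/negP => hds.
  set d := logn 2 (q - 1) in hds.
  have hf := @flip_of_splits _ _ _ hspl.
  set u := (q - 1) %/ 2 ^ d.
  have eq1 : u * 2 ^ d = q - 1 by rewrite divnK // pfactor_dvdn.
  have ou : odd u.
    apply/negPn/negP => eu.
    have : 2 ^ d.+1 %| q - 1.
      rewrite -eq1 -(odd_double_half u) (negbTE eu) add0n -muln2 -mulnA -expnS.
      exact: dvdn_mull.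
    by rewrite pfactor_dvdn // ltnn.
  set x := T %/ 2 ^ d.
  have eT : x * 2 ^ d = T by rewrite divnK // (dvdn_trans (dvdn_exp2l 2 hds) hT1).
  have key : q * x = x + u * T.
    rewrite -eT; have qe : q = u * 2 ^ d + 1 by rewrite eq1 subnK // ltnW.
    by rewrite {1}qe mulnDl mul1n addnC [x * _]mulnC mulnA.
  have claim : forall (z : 'I_(2 ^ v)) (e : nat), val z = (x + e * T) %% 2 ^ v ->
      mu q z = iter u (tau t) z.
    move=> z e hz; apply: val_inj; rewrite iter_tau /= hz modnMmr modnDml.
    rewrite mulnDr key mulnCA -modnDmr -modnMmr hqT modnMmr modnDmr.
    by rewrite addnAC.
  pose x0 : 'I_(2 ^ v) := Ordinal (ltn_pmod x hn).
  case hx: (x0 \in P).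
    have := imset_f (mu q) hx; rewrite hmu (claim x0 0).
      by rewrite (@iter_tau_mem _ _ _ hf) hx ou.
    by rewrite /= mul0n addn0.
  have hx' : tau t x0 \in P by move: hx; rewrite hf => /negbFE.
  have := imset_f (mu q) hx'; rewrite hmu (claim (tau t x0) 1).
    by rewrite (@iter_tau_mem _ _ _ hf) hx' ou.
  by rewrite tau_val /= modnDml mul1n.
- move=> hsd.
  have hd : 2 ^ s.+1 %| q - 1 by rewrite pfactor_dvdn.
  have hsv : 2 ^ s.+1 %| 2 ^ v by apply: dvdn_exp2l.
  pose P := [set i : 'I_(2 ^ v) | i %% 2 ^ s.+1 < 2 ^ s].
  have hmem : forall i, (mu q i \in P) = (i \in P).
    move=> i; rewrite !inE /= modn_dvdm //.
    set c := (q - 1) %/ 2 ^ s.+1.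
    have qe : q = c * 2 ^ s.+1 + 1 by rewrite divnK // subnK // ltnW.
    by rewrite {1}qe mulnDl mul1n mulnAC modnMDl.
  exists P; split.
    apply/eqP; rewrite eqEcard card_imset; last exact: mu_inj.
    rewrite leqnn andbT; apply/subsetP => j /imsetP [i hi ->].
    by rewrite hmem.
  apply: splits_of_flip; first exact: TT_lt.
  move=> i; rewrite !inE tau_val modn_dvdm // -modnDm (@T_mod _ _ hT1 hT2).
  rewrite expnS mul2n mod_half ?negbK ?expn_gt0 // ltn_pmod //.
  by rewrite double_gt0 expn_gt0.
Qed.
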